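(* Let MSCQ hold at $\bar x$ with modulus $\sigma>0$. Let $x_k\in\Gamma$ with $x_k\to\bar x$, $x_k^*\to0$, $\lambda^k\to\tilde\lambda$ and $u_k\to\tilde u$ be sequences such that for all $k\in\mathbb N$ $$\lambda^k\in\Lambda\big(x_k,x_k^*-\nabla f(x_k);u_k\big)\cap\sigma\|x_k^*-\nabla f(x_k)\|\mathbb B,\qquad u_k\in K_\Gamma\big(x_k,x_k^*-\nabla f(x_k)\big)\cap\mathcal S,$$ and $\limsup_{k\to\infty}\langle\mathcal H(x_k,\lambda^k)u_k,u_k\rangle<\infty$. Then $$\tilde\lambda\in\Lambda\big(\bar x,-\nabla f(\bar x)\big)\cap\sigma\|\nabla f(\bar x)\|\mathbb B\subset\Lambda^0\big(\bar x,-\nabla f(\bar x)\big),$$ $$\tilde u\in\mathcal S,\quad\langle\tilde\lambda,\nabla g(\bar x)\tilde u\rangle=0,\quad\tilde\lambda_0\big(\|\nabla g_r(\bar x)\tilde u\|^2-(\nabla g_0(\bar x)\tilde u)^2\big)=0.$$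
   Context: Setting. Let $n,m\ge1$ and let $\mathcal Q:=\{(q_0,q_r)\in\mathbb R\times\mathbb R^m:\|q_r\|\le q_0\}$ be the second-order cone. For $q=(q_0,q_r)\in\mathbb R^{1+m}$ write $\hat q:=(-q_0,q_r)$, and let $\mathcal Q^*:=\{\hat q: q\in\mathcal Q\}=\{(q_0,q_r):\|q_r\|\le-q_0\}$. The normal cone to $\mathcal Q$ at $q\in\mathcal Q$ is $N_{\mathcal Q}(q)=\mathcal Q^*$ if $q=0$, $N_{\mathcal Q}(q)=\{0\}$ if $q\in\operatorname{int}\mathcal Q$, and $N_{\mathcal Q}(q)=\{\alpha\hat q:\alpha\ge0\}$ if $q\in\operatorname{bd}\mathcal Q\setminus\{0\}$. Problem (P) is: minimize $f(x)$ subject to $x\in\Gamma:=\{x\in\mathbb R^n: g(x)\in\mathcal Q\}$, where $f:\mathbb R^n\to\mathbb R$ and $g=(g_0,g_r):\mathbb R^n\to\mathbb R\times\mathbb R^m$ are $C^2$-smooth around a point $\bar x\in\Gamma$ with $g(\bar x)=0$. $\nabla g(x)$ is the Jacobian, $\nabla g(x)^*$ its transpose, $\nabla^2 g(x)(u,v)\in\mathbb R^{1+m}$ is the vector with components $u^T\nabla^2 g_i(x)v$, and $\nabla^2\langle\lambda,g\rangle(x)=\sum_i\lambda_i\nabla^2 g_i(x)$. $\mathcal S$ is the unit sphere, $\mathbb B$ the closed unit ball, and $r\mathbb B$ the closed ball of radius $r$ about $0$. MSCQ. The metric subregularity constraint qualification (MSCQ) holds at $\bar x$ with modulus $\sigma>0$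 if there is a neighborhood $U$ of $\bar x$ with $\operatorname{dist}(x;\Gamma)\le\sigma\operatorname{dist}(g(x);\mathcal Q)$ for all $x\in U$. Multipliers and cones. $T_\Gamma(x)$ is the Bouligand tangent cone $\{v:\exists t_k\downarrow0,\ v_k\to v,\ x+t_kv_k\in\Gamma\}$. For $x\in\Gamma$, $x^*\in\mathbb R^n$: $\Lambda(x,x^* ):=\{\lambda\in N_{\mathcal Q}(g(x)):\nabla g(x)^*\lambda=x^*\}$; $\Lambda^0(x,x^* ):=\{0\}$ if $x^*=0$ and $\Lambda^0(x,x^* ):=\Lambda(x,x^* )$ otherwise; the critical cone is $K_\Gamma(x,x^* ):=\{u\in T_\Gamma(x):\langle x^*,u\rangle=0\}$. The curvature mapping is $\mathcal H(x,\lambda):=\frac{-\lambda_0}{g_0(x)}\big(\nabla g_r(x)^*\nabla g_r(x)-\nabla g_0(x)^*\nabla g_0(x)\big)$ if $g(x)\in\operatorname{bd}\mathcal Q\setminus\{0\}$ and $\mathcal H(x,\lambda):=0$ otherwise. The directional multiplier set is $\Lambda(x,x^*;u):=\operatorname{argmax}_{\lambda\in\Lambda(x,x^* )}\langle(\nabla^2\langle\lambda,g\rangle(x)+\mathcal H(x,\lambda))u,u\rangle$. *)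

(* Defs.v *)
From Stdlib Require Import Reals ClassicalEpsilon.
From mathcomp Require Import all_boot.
Set Implicit Arguments. Unset Strict Implicit. Unset Printing Implicit Defensive.
Local Open Scope R_scope.

Definition Vec (n : nat) := 'I_n -> R.
Definition Mat (n : nat) := 'I_n -> 'I_n -> R.

Definition vsum n (f : 'I_n -> R) : R := foldr Rplus 0 (map f (enum 'I_n)).
Definition dot n (u v : Vec n) : R := vsum (fun i => u i * v i).
Definition vnorm n (u : Vec n) : R := sqrt (dot u u).
Definition vzero n : Vec n := fun _ => 0.
Arguments vzero : clear implicits.
Definition vadd n (u v : Vec n) : Vec n := fun i => u i + v i.
Definition vsub n (u v : Vec n) : Vec n := fun i => u i - v i.
Definition vopp n (u : Vec n) : Vec n := fun i => - u i.
Definition vscale n (a : R) (u : Vec n) : Vec n := fun i => a * u i.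
Definition matvec n (M : Mat n) (u : Vec n) : Vec n :=
  fun a => vsum (fun b => M a b * u b).
Definition madd n (M N : Mat n) : Mat n := fun a b => M a b + N a b.
Definition quad n (M : Mat n) (u : Vec n) : R := dot (matvec M u) u.

(* R^{1+m} = Vec m.+1 ; component 0 is q_0, the others form q_r *)
Definition hd m (q : Vec m.+1) : R := q ord0.
Definition tl m (q : Vec m.+1) : Vec m := fun i => q (lift ord0 i).
Definition hat m (q : Vec m.+1) : Vec m.+1 :=
  fun i => if i == ord0 then - q i else q i.

Definition vlim n (s : nat -> Vec n) (v : Vec n) : Prop :=
  Un_cv (fun k => vnorm (vsub (s k) v)) 0.

Definition ball n (c : Vec n) (r : R) (x : Vec n) : Prop := vnorm (vsub x c) < r.

Definition has_grad n (F : Vec n -> R) (x : Vec n) (G : Vec n) : Prop :=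
  forall eps, 0 < eps -> exists d, 0 < d /\
    forall h, vnorm h < d -> Rabs (F (vadd x h) - F x - dot G h) <= eps * vnorm h.

Definition cont_at n (F : Vec n -> R) (x : Vec n) : Prop :=
  forall eps, 0 < eps -> exists d, 0 < d /\
    forall y, vnorm (vsub y x) < d -> Rabs (F y - F x) < eps.

Definition C2_near n (F : Vec n -> R) (dF : Vec n -> Vec n) (d2F : Vec n -> Mat n)
  (xb : Vec n) : Prop :=
  exists r, 0 < r /\ forall x, ball xb r x ->
    has_grad F x (dF x) /\
    (forall a, has_grad (fun y => dF y a) x (d2F x a)) /\
    (forall a b, cont_at (fun y => d2F y a b) x).

Definition is_inf (A : R -> Prop) (d : R) : Prop :=
  (forall a, A a -> d <= a) /\ (forall d', (forall a, A a -> d' <= a) -> d' <= d).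
Definition dist n (S : Vec n -> Prop) (x : Vec n) : R :=
  epsilon (inhabits 0) (fun d => is_inf (fun a => exists y, S y /\ a = vnorm (vsub x y)) d).

Definition inQ m (q : Vec m.+1) : Prop := vnorm (tl q) <= hd q.
Definition inQstar m (q : Vec m.+1) : Prop := vnorm (tl q) <= - hd q.
Definition intQ m (q : Vec m.+1) : Prop := vnorm (tl q) < hd q.
Definition bdQ m (q : Vec m.+1) : Prop := vnorm (tl q) = hd q.

(* normal cone N_Q(q), for q in Q *)
Definition NQ m (q lam : Vec m.+1) : Prop :=
  (q = vzero m.+1 /\ inQstar lam) \/
  (intQ q /\ lam = vzero m.+1) \/
  (bdQ q /\ q <> vzero m.+1 /\ exists a, 0 <= a /\ lam = vscale a (hat q)).

Section Constr.
Variables (n m : nat) (g : Vec n -> Vec m.+1) (dg : Vec n -> 'I_m.+1 -> Vec n)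
  (d2g : Vec n -> 'I_m.+1 -> Mat n).

Definition Gamma (x : Vec n) : Prop := inQ (g x).

Definition jacT (x : Vec n) (lam : Vec m.+1) : Vec n :=
  fun j => vsum (fun i => lam i * dg x i j).
Definition jacv (x : Vec n) (u : Vec n) : Vec m.+1 := fun i => dot (dg x i) u.

Definition Lambda (x xs : Vec n) (lam : Vec m.+1) : Prop :=
  NQ (g x) lam /\ jacT x lam = xs.

Definition Lambda0 (x xs : Vec n) (lam : Vec m.+1) : Prop :=
  (xs = vzero n /\ lam = vzero m.+1) \/ (xs <> vzero n /\ Lambda x xs lam).

Definition Tcone (x v : Vec n) : Prop :=
  exists (t : nat -> R) (vs : nat -> Vec n),
    (forall k, 0 < t k) /\ Un_cv t 0 /\ vlim vs v /\
    (forall k, Gamma (vadd x (vscale (t k) (vs k)))).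

Definition Kcone (x xs u : Vec n) : Prop := Tcone x u /\ dot xs u = 0.

Definition Hcurv (x : Vec n) (lam : Vec m.+1) : Mat n :=
  if excluded_middle_informative (bdQ (g x) /\ g x <> vzero m.+1) then
    fun a b => (- hd lam / hd (g x)) *
      (vsum (fun i : 'I_m => dg x (lift ord0 i) a * dg x (lift ord0 i) b)
       - dg x ord0 a * dg x ord0 b)
  else fun _ _ => 0.

Definition hessL (x : Vec n) (lam : Vec m.+1) : Mat n :=
  fun a b => vsum (fun i => lam i * d2g x i a b).

Definition LambdaDir (x xs u : Vec n) (lam : Vec m.+1) : Prop :=
  Lambda x xs lam /\
  forall mu, Lambda x xs mu ->
    quad (madd (hessL x mu) (Hcurv x mu)) u <= quad (madd (hessL x lam) (Hcurv x lam)) u.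

Definition MSCQ (xb : Vec n) (sigma : R) : Prop :=
  exists r, 0 < r /\ forall x, ball xb r x -> dist Gamma x <= sigma * dist (@inQ m) (g x).

End Constr.

(* Main.v *)
Require Import Defs.
From Stdlib Require Import Reals ClassicalEpsilon Lra Lia Psatz FunctionalExtensionality Classical.
From mathcomp Require Import all_boot zify.
Set Implicit Arguments. Unset Strict Implicit.
Local Open Scope R_scope.

Definition lsum (T : Type) (s : seq T) (f : T -> R) : R := foldr Rplus 0 (map f s).

Lemma lsum_ext T (s : seq T) f g : (forall i, f i = g i) -> lsum s f = lsum s g.
Proof. move=> H; rewrite /lsum; elim: s => //= a s IH; rewrite IH H; reflexivity. Qed.

Lemma lsum_add T (s : seq T) f g : lsum s (fun i => f i + g i) = lsum s f + lsum s g.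
Proof. rewrite /lsum; elim: s => /= [|a s IH]; [ring| rewrite IH; ring]. Qed.

Lemma lsum_opp T (s : seq T) f : lsum s (fun i => - f i) = - lsum s f.
Proof. rewrite /lsum; elim: s => /= [|a s IH]; [ring| rewrite IH; ring]. Qed.

Lemma lsum_sub T (s : seq T) f g : lsum s (fun i => f i - g i) = lsum s f - lsum s g.
Proof. rewrite /lsum; elim: s => /= [|a s IH]; [ring| rewrite IH; ring]. Qed.

Lemma lsum_mull T (s : seq T) c f : lsum s (fun i => c * f i) = c * lsum s f.
Proof. rewrite /lsum; elim: s => /= [|a s IH]; [ring| rewrite IH; ring]. Qed.

Lemma lsum_mulr T (s : seq T) c f : lsum s (fun i => f i * c) = lsum s f * c.
Proof. rewrite /lsum; elim: s => /= [|a s IH]; [ring| rewrite IH; ring]. Qed.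

Lemma lsum_zero T (s : seq T) : lsum s (fun _ => 0) = 0.
Proof. rewrite /lsum; elim: s => /= [|a s IH]; [ring| rewrite IH; ring]. Qed.

Lemma lsum_ge0 T (s : seq T) f : (forall i, 0 <= f i) -> 0 <= lsum s f.
Proof. move=> H; rewrite /lsum; elim: s => /= [|a s IH]; [lra| have := H a; lra]. Qed.

Lemma lsum_swap T U (s : seq T) (t : seq U) F :
  lsum s (fun a => lsum t (fun b => F a b)) = lsum t (fun b => lsum s (fun a => F a b)).
Proof.
elim: s => /= [|a s IH].
  by rewrite /lsum /=; rewrite -/(lsum t (fun _ => 0)) lsum_zero.
rewrite /lsum /= -/(lsum s _) IH -/(lsum t _).
by rewrite -lsum_add.
Qed.

Lemma lsum_term (T : eqType) (s : seq T) f i : (forall j, 0 <= f j) -> i \in s -> f i <= lsum s f.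
Proof.
move=> H; rewrite /lsum; elim: s => //= a s IH; rewrite in_cons => /orP [/eqP ->|Hi].
  have := lsum_ge0 s H; rewrite /lsum; lra.
have := IH Hi; have := H a; lra.
Qed.

Lemma lsum_zero_inv (T : eqType) (s : seq T) f i : (forall j, 0 <= f j) -> lsum s f = 0 -> i \in s -> f i = 0.
Proof. move=> H H0 Hi; have := lsum_term H Hi; have := H i; lra. Qed.

Lemma cv_lsum T (s : seq T) (F : nat -> T -> R) L :
  (forall i, Un_cv (fun k => F k i) (L i)) -> Un_cv (fun k => lsum s (F k)) (lsum s L).
Proof.
move=> H; rewrite /lsum; elim: s => /= [|a s IH].
  by move=> e He; exists 0%nat => k _; rewrite /R_dist Rminus_0_r Rabs_R0.
exact: CV_plus.
Qed.
Lemma sq_ge0 x : 0 <= x * x.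
Proof. apply: Rle_0_sqr. Qed.

Lemma vsumE n (f : 'I_n -> R) : vsum f = lsum (enum 'I_n) f.
Proof. reflexivity. Qed.

Lemma lsum_map T U (s : seq T) (h : T -> U) f : lsum (map h s) f = lsum s (fun i => f (h i)).
Proof. rewrite /lsum; elim: s => //= a s IH; rewrite IH; reflexivity. Qed.

Lemma vsum_split m (f : 'I_m.+1 -> R) : vsum f = f ord0 + vsum (fun i => f (lift ord0 i)).
Proof. rewrite !vsumE enum_ordSl /lsum /= -/(lsum _ _) lsum_map; reflexivity. Qed.

Lemma dot_split m (a b : Vec m.+1) : dot a b = hd a * hd b + dot (tl a) (tl b).
Proof. rewrite /dot vsum_split; reflexivity. Qed.

Lemma dot_ge0 n (a : Vec n) : 0 <= dot a a.
Proof. apply: lsum_ge0 => i; apply: sq_ge0. Qed.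

Lemma dot_comm n (a b : Vec n) : dot a b = dot b a.
Proof. apply: lsum_ext => i; ring. Qed.

Lemma dot_zero_inv n (a : Vec n) : dot a a = 0 -> forall i, a i = 0.
Proof.
move=> H i; have := @lsum_zero_inv _ (enum 'I_n) (fun i => a i * a i) i.
move=> /(_ _ H); rewrite mem_enum => /(_ (fun j => sq_ge0 _) isT); nra.
Qed.

Lemma comp_le_dot n (a : Vec n) i : a i * a i <= dot a a.
Proof. apply: lsum_term; [move=> j; apply: sq_ge0 | by rewrite mem_enum]. Qed.

Lemma dot_quad n (a b : Vec n) t :
  lsum (enum 'I_n) (fun i => (a i - t * b i) * (a i - t * b i)) = dot a a - 2 * t * dot a b + t * t * dot b b.
Proof. rewrite /dot /vsum /lsum; elim: (enum 'I_n) => /= [|x s IH]; [ring| rewrite IH; ring]. Qed.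

Lemma CS2 n (a b : Vec n) : dot a b * dot a b <= dot a a * dot b b.
Proof.
have Hq : forall t, 0 <= dot a a - 2 * t * dot a b + t * t * dot b b.
  move=> t; rewrite -dot_quad; apply: lsum_ge0 => i; apply: sq_ge0.
have HA := dot_ge0 a; have HB := dot_ge0 b.
case: (Rle_lt_or_eq_dec 0 (dot b b) HB) => HB0.
  have := Hq (dot a b / dot b b).
  have E : forall A P B, 0 < B -> A - 2 * (P / B) * P + P / B * (P / B) * B = (A * B - P * P) / B.
    by move=> A P B HB'; field; lra.
  rewrite E //.
  move: (dot a a) (dot a b) (dot b b) HB0 => A P B HB' H.
  have : 0 <= (A * B - P * P) / B * B by nra.
  rewrite /Rdiv Rmult_assoc Rinv_l; lra.
rewrite -HB0 Rmult_0_r.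
case: (Req_dec (dot a b) 0) => HP; first by rewrite HP; lra.
have := Hq ((dot a a + 1) / (2 * dot a b)); rewrite -HB0.
have E : dot a a - 2 * ((dot a a + 1) / (2 * dot a b)) * dot a b + (dot a a + 1) / (2 * dot a b) * ((dot a a + 1) / (2 * dot a b)) * 0 = -1 by field.
rewrite E; lra.
Qed.

Lemma vnorm_sq n (a : Vec n) : vnorm a * vnorm a = dot a a.
Proof. rewrite /vnorm; apply: sqrt_sqrt; apply: dot_ge0. Qed.

Lemma vnorm_ge0 n (a : Vec n) : 0 <= vnorm a.
Proof. apply: sqrt_pos. Qed.

Lemma dot_abs n (a b : Vec n) : Rabs (dot a b) <= vnorm a * vnorm b.
Proof.
have H := CS2 a b. rewrite -!vnorm_sq in H.
have H' : Rsqr (dot a b) <= Rsqr (vnorm a * vnorm b).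
  rewrite /Rsqr; move: H; move: (dot a b) (vnorm a) (vnorm b) => P A B H; nra.
have H2 := Rsqr_le_abs_0 _ _ H'.
rewrite (Rabs_pos_eq (vnorm a * vnorm b)) in H2 => //.
apply: Rmult_le_pos; apply: vnorm_ge0.
Qed.

Lemma sqrt_le_c x c : 0 <= c -> x <= c * c -> sqrt x <= c.
Proof. move=> Hc Hx; rewrite -(sqrt_square c Hc); apply: sqrt_le_1_alt; lra. Qed.

Lemma vnorm_le_c n (a : Vec n) c : 0 <= c -> dot a a <= c * c -> vnorm a <= c.
Proof. move=> Hc H; exact: sqrt_le_c. Qed.

Lemma vnorm_le_sq n (a : Vec n) c : vnorm a <= c -> dot a a <= c * c.
Proof. move=> H; rewrite -vnorm_sq; have := vnorm_ge0 a; nra. Qed.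

Lemma dot_vzero n : dot (vzero n) (vzero n) = 0.
Proof. rewrite /dot vsumE -(lsum_zero (enum 'I_n)); apply: lsum_ext => i; rewrite /vzero; ring. Qed.

Lemma vnorm_vzero n : vnorm (vzero n) = 0.
Proof. rewrite /vnorm dot_vzero; exact: sqrt_0. Qed.

Lemma vnorm0_inv n (a : Vec n) : vnorm a = 0 -> a = vzero n.
Proof.
move=> H; apply: functional_extensionality => i; rewrite /vzero.
apply: dot_zero_inv; rewrite -vnorm_sq H; ring.
Qed.

Lemma dot_scale n t (a b : Vec n) : dot (vscale t a) b = t * dot a b.
Proof. rewrite /dot /vscale !vsumE -lsum_mull; apply: lsum_ext => i; ring. Qed.

Lemma vnorm_scale n t (a : Vec n) : 0 <= t -> vnorm (vscale t a) = t * vnorm a.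
Proof.
move=> Ht; have E : dot (vscale t a) (vscale t a) = (t * t) * dot a a.
  by rewrite dot_scale dot_comm dot_scale; ring.
rewrite /vnorm E sqrt_mult_alt ?sqrt_square //; exact: sq_ge0.
Qed.

Lemma dot_addsq n (a b : Vec n) : dot (vadd a b) (vadd a b) = dot a a + 2 * dot a b + dot b b.
Proof. rewrite /dot /vadd /vsum /lsum; elim: (enum 'I_n) => /= [|x s IH]; [ring| rewrite IH; ring]. Qed.

Lemma vnorm_tri n (a b : Vec n) : vnorm (vadd a b) <= vnorm a + vnorm b.
Proof.
apply: vnorm_le_c; first by have := vnorm_ge0 a; have := vnorm_ge0 b; lra.
rewrite dot_addsq -!vnorm_sq; have := dot_abs a b; have := Rle_abs (dot a b); nra.
Qed.

Lemma comp_abs_le n (a : Vec n) i : Rabs (a i) <= vnorm a.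
Proof.
rewrite -(sqrt_Rsqr_abs (a i)); apply: sqrt_le_1_alt; exact: comp_le_dot.
Qed.

Lemma vlim_comp n (s : nat -> Vec n) v i : vlim s v -> Un_cv (fun k => s k i) (v i).
Proof.
move=> H e He; have [N HN] := H e He; exists N => k Hk; have := HN k Hk.
rewrite /Rdist Rminus_0_r Rabs_pos_eq; last exact: vnorm_ge0.
have := comp_abs_le (vsub (s k) v) i; rewrite /vsub /Rdist; lra.
Qed.

Lemma cv_const (c : R) : Un_cv (fun _ => c) c.
Proof. move=> e He; exists 0%nat => k _; rewrite /Rdist Rminus_diag Rabs_R0; lra. Qed.

Lemma comp_vlim n (s : nat -> Vec n) v : (forall i, Un_cv (fun k => s k i) (v i)) -> vlim s v.
Proof.
move=> H; rewrite /vlim.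
have H2 : Un_cv (fun k => dot (vsub (s k) v) (vsub (s k) v)) 0.
  rewrite -(lsum_zero (enum 'I_n)); apply: cv_lsum => i.
  rewrite -(Rmult_0_r 0); apply: CV_mult; rewrite /vsub;
  have := CV_minus _ _ _ _ (H i) (cv_const (v i));
  by rewrite Rminus_diag.
move=> e He; have [N HN] := H2 (e * e) ltac:(nra).
exists N => k Hk; have := HN k Hk; rewrite /Rdist !Rminus_0_r.
rewrite (Rabs_pos_eq (vnorm _)); last exact: vnorm_ge0.
rewrite Rabs_pos_eq; last exact: dot_ge0.
move=> Hd.
have : vnorm (vsub (s k) v) <= sqrt (e * e) by apply: sqrt_le_1_alt; lra.
rewrite sqrt_square; last lra.
move=> Hle; case: (Rle_lt_or_eq_dec _ _ Hle) => // Heq.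
rewrite -vnorm_sq Heq in Hd; lra.
Qed.

Lemma lim_le_ev (u v : nat -> R) a b : (exists N, forall k, (N <= k)%N -> u k <= v k) ->
  Un_cv u a -> Un_cv v b -> a <= b.
Proof.
move=> [N HN] Hu Hv; apply: Rnot_lt_le => Hab.
have He : (a - b) / 2 > 0 by lra.
have [N1 H1] := Hu _ He; have [N2 H2] := Hv _ He.
pose k := (N + N1 + N2)%coq_nat.
have : (N <= k)%coq_nat by rewrite /k; lia.
move=> /leP /HN.
have := H1 k ltac:(rewrite /k; lia); have := H2 k ltac:(rewrite /k; lia).
rewrite /Rdist; move=> A B; have := Rle_abs (a - u k); rewrite -Rabs_Ropp in B.
have := Rle_abs (v k - b). rewrite Ropp_minus_distr in B. lra.
Qed.

Lemma cv_ev_lt (u : nat -> R) a c : Un_cv u a -> a < c -> exists N, forall k, (N <= k)%N -> u k < c.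
Proof.
move=> Hu Hac; have [N HN] := Hu (c - a) ltac:(lra); exists N => k /leP Hk.
have := HN k Hk; rewrite /Rdist => H; have := Rle_abs (u k - a); lra.
Qed.

Lemma cv_ev_gt (u : nat -> R) a c : Un_cv u a -> c < a -> exists N, forall k, (N <= k)%N -> c < u k.
Proof.
move=> Hu Hac; have [N HN] := Hu (a - c) ltac:(lra); exists N => k /leP Hk.
have := HN k Hk; rewrite /Rdist => H; have := Rle_abs (- (u k - a)); rewrite Rabs_Ropp; lra.
Qed.

Lemma vlim_ball n (y : nat -> Vec n) x r : vlim y x -> 0 < r -> exists N, forall k, (N <= k)%N -> ball x r (y k).
Proof.
move=> H Hr; have [N HN] := cv_ev_lt H Hr; exists N => k Hk; exact: HN.
Qed.

Lemma vadd_sub n (x y : Vec n) : vadd x (vsub y x) = y.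
Proof. apply: functional_extensionality => i; rewrite /vadd /vsub; ring. Qed.

Lemma grad_lip n F (x G : Vec n) : has_grad F x G ->
  exists d, 0 < d /\ forall h, vnorm h < d -> Rabs (F (vadd x h) - F x) <= (vnorm G + 1) * vnorm h.
Proof.
move=> H; have [d [Hd Hh]] := H 1 Rlt_0_1; exists d; split => // h Hn.
have H1 := Hh h Hn; have H2 := dot_abs G h.
have E : F (vadd x h) - F x = (F (vadd x h) - F x - dot G h) + dot G h by ring.
rewrite E; have := Rabs_triang (F (vadd x h) - F x - dot G h) (dot G h); nra.
Qed.

Lemma cont_seq n F (x G : Vec n) (y : nat -> Vec n) : has_grad F x G -> vlim y x ->
  Un_cv (fun k => F (y k)) (F x).
Proof.
move=> H Hy e He; have [d [Hd Hh]] := grad_lip H.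
have HG := vnorm_ge0 G.
have Hd' : 0 < Rmin d (e / (vnorm G + 2)).
  apply: Rmin_pos => //; apply: Rdiv_lt_0_compat; lra.
have [N HN] := Hy _ Hd'; exists N => k Hk; have := HN k Hk.
rewrite /Rdist Rminus_0_r Rabs_pos_eq; last exact: vnorm_ge0.
move=> Hk'; have Hk1 : vnorm (vsub (y k) x) < d by have := Rmin_l d (e / (vnorm G + 2)); lra.
have Hk2 : vnorm (vsub (y k) x) < e / (vnorm G + 2) by have := Rmin_r d (e / (vnorm G + 2)); lra.
have := Hh _ Hk1; rewrite vadd_sub => Hle.
have : (vnorm G + 1) * vnorm (vsub (y k) x) < e.
  have := vnorm_ge0 (vsub (y k) x).
  have : vnorm (vsub (y k) x) * (vnorm G + 2) < e.
    move: Hk2; rewrite /Rdiv => Hk2.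
    have := Rmult_lt_compat_r (vnorm G + 2) _ _ ltac:(lra) Hk2.
    rewrite Rmult_assoc Rinv_l; lra.
  nra.
lra.
Qed.

Lemma cv_dot_r n (G : Vec n) (v : nat -> Vec n) u : vlim v u -> Un_cv (fun j => dot G (v j)) (dot G u).
Proof.
move=> H; rewrite /dot !vsumE; apply: (@cv_lsum _ _ (fun j i => G i * v j i)) => i.
apply: CV_mult; [exact: cv_const | exact: vlim_comp].
Qed.

Lemma cv_ext (u w : nat -> R) l : (forall k, u k = w k) -> Un_cv u l -> Un_cv w l.
Proof. move=> E H e He; have [N HN] := H e He; exists N => k Hk; rewrite -E; exact: HN. Qed.

Lemma vnorm_seq_bound n (v : nat -> Vec n) u : vlim v u ->
  exists N, forall j, (N <= j)%N -> vnorm (v j) < vnorm u + 1.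
Proof.
move=> H; have [N HN] := cv_ev_lt H Rlt_0_1; exists N => j Hj.
have := HN j Hj; have := vnorm_tri (vsub (v j) u) u.
have -> : vadd (vsub (v j) u) u = v j.
  by apply: functional_extensionality => i; rewrite /vadd /vsub; ring.
lra.
Qed.

Lemma grad_dir n F (x G : Vec n) (t : nat -> R) (v : nat -> Vec n) u :
  has_grad F x G -> F x = 0 -> (forall j, 0 < t j) -> Un_cv t 0 -> vlim v u ->
  Un_cv (fun j => F (vadd x (vscale (t j) (v j))) / t j) (dot G u).
Proof.
move=> HF Fx0 Ht Ht0 Hv.
pose w j := F (vadd x (vscale (t j) (v j))) / t j - dot G (v j).
have Hw : Un_cv w 0.
  move=> e He.
  have [N1 HN1] := vnorm_seq_bound Hv.
  set B := vnorm u + 1 in HN1 *.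
  have HB : 0 < B by have := vnorm_ge0 u; rewrite /B; lra.
  have He' : 0 < e / (2 * B) by apply: Rdiv_lt_0_compat; lra.
  have [d [Hd Hh]] := HF _ He'.
  have [N2 HN2] := cv_ev_lt Ht0 (Rdiv_lt_0_compat _ _ Hd HB).
  exists (N1 + N2)%N => j /leP Hj.
  have Hv1 := HN1 j ltac:(lia). have Ht2 := HN2 j ltac:(lia).
  have Htj := Ht j.
  have Hvn := vnorm_ge0 (v j).
  have Hhn : vnorm (vscale (t j) (v j)) < d.
    rewrite vnorm_scale; last lra.
    have : t j * B < d.
      move: Ht2; rewrite /Rdiv => Ht2.
      have := Rmult_lt_compat_r B _ _ HB Ht2; rewrite Rmult_assoc Rinv_l; lra.
    move=> HtB; apply: (Rle_lt_trans _ (t j * B)) => //; apply: Rmult_le_compat_l; lra.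
  have := Hh _ Hhn; rewrite Fx0 vnorm_scale; last lra.
  rewrite dot_comm dot_scale dot_comm Rminus_0_r => Hle.
  rewrite /Rdist Rminus_0_r /w.
  have E : F (vadd x (vscale (t j) (v j))) / t j - dot G (v j) =
     (F (vadd x (vscale (t j) (v j))) - t j * dot G (v j)) / t j by field; lra.
  rewrite E /Rdiv Rabs_mult Rabs_inv (Rabs_pos_eq (t j)); last lra.
  apply: (Rle_lt_trans _ (e / (2 * B) * vnorm (v j))).
    apply: (Rmult_le_reg_r (t j)) => //; rewrite /Rdiv Rmult_assoc Rinv_l; last lra.
    rewrite Rmult_1_r; move: Hle; rewrite /Rdiv; nra.
  have : e / (2 * B) * B = e / 2 by field; lra.
  move=> EB; have : e / (2 * B) * vnorm (v j) <= e / (2 * B) * B by apply: Rmult_le_compat_l; lra.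
  lra.
have := CV_plus _ _ _ _ Hw (cv_dot_r G Hv); rewrite Rplus_0_l.
apply: cv_ext => j; rewrite /w; ring.
Qed.

Lemma lsum_prod T (s : seq T) f g : lsum s f * lsum s g = lsum s (fun a => lsum s (fun b => f a * g b)).
Proof.
rewrite -lsum_mulr; apply: lsum_ext => a; rewrite -lsum_mull; reflexivity.
Qed.

Lemma quad_curv n m (P : 'I_m -> Vec n) (Q : Vec n) c (u : Vec n) :
  quad (fun a b => c * (vsum (fun i => P i a * P i b) - Q a * Q b)) u
  = c * (vsum (fun i => dot (P i) u * dot (P i) u) - dot Q u * dot Q u).
Proof.
rewrite /quad /dot /matvec !vsumE.
set sa := enum 'I_n; set si := enum 'I_m.
rewrite lsum_prod.
have -> : lsum si (fun i => lsum sa (fun a => P i a * u a) * lsum sa (fun a => P i a * u a))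
   = lsum sa (fun a => lsum sa (fun b => lsum si (fun i => P i a * u a * (P i b * u b)))).
  rewrite (@lsum_ext _ si _ (fun i => lsum sa (fun a => lsum sa (fun b => P i a * u a * (P i b * u b))))); last by move=> i; exact: lsum_prod.
  rewrite lsum_swap; apply: lsum_ext => a; exact: lsum_swap.
rewrite -lsum_sub -lsum_mull; apply: lsum_ext => a.
rewrite -lsum_sub -lsum_mull -lsum_mulr; apply: lsum_ext => b.
rewrite -[lsum si (fun i => _)]/(lsum si (fun i => P i a * u a * (P i b * u b))).
have -> : lsum si (fun i => P i a * u a * (P i b * u b)) = lsum si (fun i => P i a * P i b) * (u a * u b).
  rewrite -lsum_mulr; apply: lsum_ext => i; ring.
have -> : vsum (fun i : 'I_m => P i a * P i b) = lsum si (fun i => P i a * P i b) by [].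
move: (lsum si _) => S; ring.
Qed.

Definition Qs m (l : Vec m.+1) := dot (tl l) (tl l) <= hd l * hd l /\ hd l <= 0.
Definition Qp m (l : Vec m.+1) := dot (tl l) (tl l) <= hd l * hd l /\ 0 <= hd l.

Lemma hd_hat_scale m a (q : Vec m.+1) : hd (vscale a (hat q)) = - (a * hd q).
Proof. rewrite /hd /vscale /hat eqxx; ring. Qed.

Lemma tl_hat_scale m a (q : Vec m.+1) : tl (vscale a (hat q)) = vscale a (tl q).
Proof.
apply: functional_extensionality => i; rewrite /tl /vscale /hat.
have -> : (lift ord0 i == ord0) = false by rewrite eq_sym; apply/negbTE; exact: neq_lift.
reflexivity.
Qed.

Lemma NQ_Qs m (q l : Vec m.+1) : NQ q l -> Qs l.
Proof.
case=> [[_ H]|[[_ ->]|[Hb [_ [a [Ha ->]]]]]].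
- rewrite /inQstar in H; split; last by have := vnorm_ge0 (tl l); lra.
  have := vnorm_le_sq H; lra.
- rewrite /Qs /hd /vzero; split; last lra.
  have -> : dot (tl (vzero m.+1)) (tl (vzero m.+1)) = 0 by exact: dot_vzero.
  lra.
- rewrite /Qs hd_hat_scale tl_hat_scale dot_scale dot_comm dot_scale -vnorm_sq.
  rewrite /bdQ in Hb; rewrite Hb; split; first lra.
  have := vnorm_ge0 (tl q); rewrite Hb => H0; nra.
Qed.

Lemma inQ_Qp m (q : Vec m.+1) : inQ q -> Qp q.
Proof.
rewrite /inQ => H; split; last by have := vnorm_ge0 (tl q); lra.
exact: vnorm_le_sq.
Qed.

Lemma Qp_scale m s (q : Vec m.+1) : 0 < s -> Qp q -> Qp (vscale s q).
Proof.
move=> Hs [H1 H2]; rewrite /Qp.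
have -> : tl (vscale s q) = vscale s (tl q) by [].
rewrite dot_scale dot_comm dot_scale /hd /vscale; rewrite /hd in H1 H2.
split; last nra.
have := sq_ge0 s; nra.
Qed.

Lemma alg_A m (l d : Vec m.+1) : Qs l -> hd l < 0 -> Qp d -> dot l d = 0 ->
  dot (tl d) (tl d) = hd d * hd d.
Proof.
move=> [L1 L2] Hl [D1 D2]; rewrite dot_split => H0.
have CS := CS2 (tl l) (tl d).
have HDr := dot_ge0 (tl d).
move: (dot (tl l) (tl l)) (dot (tl d) (tl d)) (dot (tl l) (tl d)) (hd l) (hd d) L1 D1 CS HDr H0 Hl D2
  => L D P l0 d0 L1 D1 CS HDr H0 Hl D2.
have HP : P = - (l0 * d0) by lra.
subst P.
have : l0 * l0 * (d0 * d0) <= l0 * l0 * D by nra.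
move=> H; have : d0 * d0 <= D.
  apply: (Rmult_le_reg_l (l0 * l0)); [nra | lra].
lra.
Qed.

Lemma alg_B m (q d : Vec m.+1) a : bdQ q -> 0 < a * hd q ->
  dot (vscale a (hat q)) d = 0 -> hd d * hd d <= dot (tl d) (tl d).
Proof.
rewrite /bdQ dot_split hd_hat_scale tl_hat_scale dot_scale => Hb Hpos H0.
have CS := CS2 (tl q) (tl d).
rewrite -vnorm_sq Hb in CS.
have Hq := vnorm_ge0 (tl q); rewrite Hb in Hq.
have Ha : 0 < a by nra.
have Hq0 : 0 < hd q by nra.
have HP : dot (tl q) (tl d) = hd q * hd d.
  apply: (Rmult_eq_reg_l a); [lra | lra].
rewrite HP in CS.
move: (hd q) (hd d) (dot (tl d) (tl d)) CS Hq0 => q0 d0 D CS Hq0.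
apply: (Rmult_le_reg_l (q0 * q0)); nra.
Qed.

Lemma cv_dot n (a b : nat -> Vec n) A B : (forall i, Un_cv (fun k => a k i) (A i)) ->
  (forall i, Un_cv (fun k => b k i) (B i)) -> Un_cv (fun k => dot (a k) (b k)) (dot A B).
Proof.
move=> Ha Hb; rewrite /dot !vsumE; apply: (@cv_lsum _ _ (fun k i => a k i * b k i)) => i.
exact: CV_mult.
Qed.

Lemma Qs_lim m (s : nat -> Vec m.+1) L : (exists N, forall k, (N <= k)%N -> Qs (s k)) ->
  (forall i, Un_cv (fun k => s k i) (L i)) -> Qs L.
Proof.
move=> [N HN] H.
have Ht : forall i, Un_cv (fun k => tl (s k) i) (tl L i) by move=> i; exact: H.
have Hh : Un_cv (fun k => hd (s k)) (hd L) by exact: H.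
split.
- apply: (lim_le_ev _ (cv_dot Ht Ht) (CV_mult _ _ _ _ Hh Hh)).
  by exists N => k Hk; case: (HN k Hk).
- apply: (lim_le_ev _ Hh (cv_const 0)).
  by exists N => k Hk; case: (HN k Hk).
Qed.

Lemma Qp_lim m (s : nat -> Vec m.+1) L : (exists N, forall k, (N <= k)%N -> Qp (s k)) ->
  (forall i, Un_cv (fun k => s k i) (L i)) -> Qp L.
Proof.
move=> [N HN] H.
have Ht : forall i, Un_cv (fun k => tl (s k) i) (tl L i) by move=> i; exact: H.
have Hh : Un_cv (fun k => hd (s k)) (hd L) by exact: H.
split.
- apply: (lim_le_ev _ (cv_dot Ht Ht) (CV_mult _ _ _ _ Hh Hh)).
  by exists N => k Hk; case: (HN k Hk).
- apply: (lim_le_ev _ (cv_const 0) Hh).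
  by exists N => k Hk; case: (HN k Hk).
Qed.

Lemma jacT_dot n m (dg : Vec n -> 'I_m.+1 -> Vec n) x (l : Vec m.+1) (u : Vec n) :
  dot (jacT dg x l) u = dot l (jacv dg x u).
Proof.
rewrite /dot /jacT /jacv !vsumE.
rewrite (@lsum_ext _ _ _ (fun j => lsum (enum 'I_m.+1) (fun i => l i * dg x i j * u j))); last first.
  by move=> j; rewrite vsumE -lsum_mulr.
rewrite lsum_swap; apply: lsum_ext => i; rewrite /dot vsumE -lsum_mull; apply: lsum_ext => j; ring.
Qed.

Lemma common_radius p (P : 'I_p -> R -> Prop) : (forall i, exists r, 0 < r /\ P i r) ->
  (forall i r r', 0 < r' <= r -> P i r -> P i r') -> exists r, 0 < r /\ forall i, P i r.
Proof.
move=> H Hmon.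
have : forall s : seq 'I_p, exists r, 0 < r /\ forall i, i \in s -> P i r.
  elim=> [|a s [r [Hr IH]]]; first by exists 1; split => //; lra.
  have [ra [Hra Pa]] := H a.
  exists (Rmin r ra); split; first exact: Rmin_pos.
  move=> i; rewrite in_cons => /orP [/eqP ->|Hi].
    apply: (Hmon _ ra) => //; split; [exact: Rmin_pos | exact: Rmin_r].
  apply: (Hmon _ r); last exact: IH.
  split; [exact: Rmin_pos | exact: Rmin_l].
move=> /(_ (enum 'I_p)) [r [Hr Hs]]; exists r; split => // i; apply: Hs; by rewrite mem_enum.
Qed.

Theorem lemma4p2 (n m : nat) (f : Vec n -> R) (df : Vec n -> Vec n) (d2f : Vec n -> Mat n)
  (g : Vec n -> Vec m.+1) (dg : Vec n -> 'I_m.+1 -> Vec n) (d2g : Vec n -> 'I_m.+1 -> Mat n)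
  (xb : Vec n) (sigma : R)
  (x xs : nat -> Vec n) (lam : nat -> Vec m.+1) (u : nat -> Vec n)
  (lamt : Vec m.+1) (ut : Vec n) :
  n <> 0%nat -> m <> 0%nat ->
  C2_near f df d2f xb ->
  (forall i, C2_near (fun y => g y i) (fun y => dg y i) (fun y => d2g y i) xb) ->
  g xb = vzero m.+1 ->
  0 < sigma -> MSCQ g xb sigma ->
  (forall k, Gamma g (x k)) ->
  vlim x xb -> vlim xs (vzero n) -> vlim lam lamt -> vlim u ut ->
  (forall k, LambdaDir g dg d2g (x k) (vsub (xs k) (df (x k))) (u k) (lam k) /\
             vnorm (lam k) <= sigma * vnorm (vsub (xs k) (df (x k)))) ->
  (forall k, Kcone g (x k) (vsub (xs k) (df (x k))) (u k) /\ vnorm (u k) = 1) ->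
  (exists M : R, exists N : nat, forall k : nat, (N <= k)%nat ->
      quad (Hcurv g dg (x k) (lam k)) (u k) <= M) ->
  (Lambda g dg xb (vopp (df xb)) lamt /\ vnorm lamt <= sigma * vnorm (vopp (df xb))) /\
  (forall mu, Lambda g dg xb (vopp (df xb)) mu /\ vnorm mu <= sigma * vnorm (vopp (df xb)) ->
      Lambda0 g dg xb (vopp (df xb)) mu) /\
  vnorm ut = 1 /\
  dot lamt (jacv dg xb ut) = 0 /\
  hd lamt * (vnorm (tl (jacv dg xb ut)) ^ 2 - hd (jacv dg xb ut) ^ 2) = 0.
Proof.
move=> Hn Hm Cf Cg gxb0 Hsig HMSCQ HGam Hx Hxs Hlam Hu Hdir HK [M [N3 HM]].
have ball_self : forall r, 0 < r -> ball xb r xb.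
  move=> r Hr; rewrite /ball.
  have -> : vsub xb xb = vzero n by apply: functional_extensionality => i; rewrite /vsub /vzero; ring.
  by rewrite vnorm_vzero.
have Cdg : forall i j, Un_cv (fun k => dg (x k) i j) (dg xb i j).
  move=> i j; have [r [Hr Hr']] := Cg i; have [_ [H2 _]] := Hr' xb (ball_self r Hr).
  exact: (cont_seq (H2 j) Hx).
have Cdf : forall j, Un_cv (fun k => df (x k) j) (df xb j).
  move=> j; have [r [Hr Hr']] := Cf; have [_ [H2 _]] := Hr' xb (ball_self r Hr).
  exact: (cont_seq (H2 j) Hx).
have Cg0 : forall i, Un_cv (fun k => g (x k) i) 0.
  move=> i; have [r [Hr Hr']] := Cg i; have [H1 _] := Hr' xb (ball_self r Hr).
  have := cont_seq H1 Hx; rewrite gxb0 => H; exact: H.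
pose w k := vsub (xs k) (df (x k)).
have Cw : forall j, Un_cv (fun k => w k j) (vopp (df xb) j).
  move=> j; have := CV_minus _ _ _ _ (@vlim_comp _ _ _ j Hxs) (Cdf j).
  have -> : vopp (df xb) j = vzero n j - df xb j by rewrite /vopp /vzero; ring.
  by [].
have Clam : forall i, Un_cv (fun k => lam k i) (lamt i) by move=> i; exact: vlim_comp.
have Cu : forall i, Un_cv (fun k => u k i) (ut i) by move=> i; exact: vlim_comp.
have Cd : forall i, Un_cv (fun k => jacv dg (x k) (u k) i) (jacv dg xb ut i).
  by move=> i; exact: (cv_dot (fun j => Cdg i j) Cu).
have HLk : forall k, Lambda g dg (x k) (w k) (lam k) by move=> k; exact: (Hdir k).1.1.
have Hdot0 : forall k, dot (lam k) (jacv dg (x k) (u k)) = 0.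
  by move=> k; rewrite -jacT_dot (HLk k).2; exact: (HK k).1.2.
have HQs : Qs lamt.
  apply: (Qs_lim _ Clam); exists 0%N => k _; exact: (NQ_Qs (HLk k).1).
have Hjac : jacT dg xb lamt = vopp (df xb).
  apply: functional_extensionality => j.
  apply: (UL_sequence (fun k => jacT dg (x k) (lam k) j)).
    rewrite /jacT !vsumE; apply: (@cv_lsum _ _ (fun k i => lam k i * dg (x k) i j)) => i.
    exact: CV_mult.
  apply: (cv_ext _ (Cw j)) => k; by rewrite (HLk k).2.
have Hnorm : vnorm lamt <= sigma * vnorm (vopp (df xb)).
  apply: vnorm_le_c; first by have := vnorm_ge0 (vopp (df xb)); nra.
  have -> : sigma * vnorm (vopp (df xb)) * (sigma * vnorm (vopp (df xb))) =
     sigma * sigma * dot (vopp (df xb)) (vopp (df xb)) by rewrite -vnorm_sq; ring.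
  apply: (lim_le_ev _ (cv_dot Clam Clam) (CV_mult _ _ _ _ (cv_const (sigma * sigma)) (cv_dot Cw Cw))).
  exists 0%N => k _; have := vnorm_le_sq (Hdir k).2; rewrite -/(w k) -(vnorm_sq (w k)) => H; nra.
split.
  split => //; split => //; rewrite /NQ; left; split => //.
  case: HQs => H1 H2; apply: vnorm_le_c; lra.
split.
  move=> mu [HL Hmu]; case: (classic (vopp (df xb) = vzero n)) => E.
    left; split => //; rewrite E vnorm_vzero Rmult_0_r in Hmu.
    apply: vnorm0_inv; have := vnorm_ge0 mu; lra.
  by right.
split.
  have Hdu : dot ut ut = 1.
    apply: (UL_sequence (fun k => dot (u k) (u k))); first exact: cv_dot.
    apply: (cv_ext _ (cv_const 1)) => k; rewrite -vnorm_sq (HK k).2; ring.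
  by rewrite /vnorm Hdu sqrt_1.
split.
  apply: (UL_sequence (fun k => dot (lam k) (jacv dg (x k) (u k)))); first exact: cv_dot.
  apply: (cv_ext _ (cv_const 0)) => k; by rewrite Hdot0.
have Esq : forall y, y ^ 2 = y * y by move=> y; ring.
rewrite !Esq vnorm_sq.
case: HQs => [_ Hl0]; case: (Rle_lt_or_eq_dec _ _ Hl0) => Hl0'; last by rewrite Hl0'; ring.
set c := - hd lamt / 2.
have Hc : 0 < c by rewrite /c; lra.
have [N1 HN1] := cv_ev_lt (Clam ord0) (ltac:(rewrite /c; lra) : hd lamt < - c).
have [r [Hr Hrad]] := @common_radius _ (fun i r => forall y, ball xb r y -> has_grad (fun y => g y i) y (dg y i))
  (fun i => let: ex_intro r (conj Hr Hr') := Cg i in ex_intro _ r (conj Hr (fun y Hy => (Hr' y Hy).1)))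
  (fun i r r' Hrr H y Hy => H y ltac:(rewrite /ball in Hy *; lra)).
have [N2 HN2] := vlim_ball Hx Hr.
set K := Rmax M 0 / c.
pose dk k := jacv dg (x k) (u k).
pose ak k := dot (tl (dk k)) (tl (dk k)) - hd (dk k) * hd (dk k).
have Ha : Un_cv ak (dot (tl (jacv dg xb ut)) (tl (jacv dg xb ut)) - hd (jacv dg xb ut) * hd (jacv dg xb ut)).
  rewrite /ak /dk; apply: CV_minus; last by apply: CV_mult; exact: Cd.
  by apply: cv_dot => i; exact: Cd.
have Claim : forall k, (N1 + N2 + N3 <= k)%N -> 0 <= ak k /\ ak k <= K * g (x k) ord0.
  move=> k Hk.
  have Hlk : hd (lam k) < - c by apply: HN1; lia.
  have Hbk : ball xb r (x k) by apply: HN2; lia.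
  have HMk : quad (Hcurv g dg (x k) (lam k)) (u k) <= M by apply: HM; lia.
  have [HNQ Hjk] := HLk k.
  have Hd0 := Hdot0 k.
  have Hqs := NQ_Qs HNQ.
  case: HNQ => [[Hq0 _]|[[_ Hl]|[Hb [Hnz [al [Hal Hl]]]]]].
  - have HQp : Qp (dk k).
      have [t [vs [Ht [Ht0 [Hvs HG]]]]] := (HK k).1.1.
      apply: (@Qp_lim _ (fun j => vscale (/ t j) (g (vadd (x k) (vscale (t j) (vs j)))))).
        exists 0%N => j _; apply: Qp_scale; first exact: Rinv_0_lt_compat.
        exact: (inQ_Qp (HG j)).
      move=> i.
      have Hg : has_grad (fun y => g y i) (x k) (dg (x k) i) by exact: Hrad.
      have Hgi0 : g (x k) i = 0 by rewrite Hq0.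
      have := grad_dir Hg Hgi0 Ht Ht0 Hvs.
      apply: cv_ext => j; rewrite /vscale /Rdiv; ring.
    have Ha0 : ak k = 0.
      rewrite /ak (alg_A Hqs _ HQp Hd0); [ring | lra].
    rewrite Ha0 Hq0 /vzero Rmult_0_r; lra.
  - rewrite Hl /hd /vzero in Hlk; lra.
  - have Hhd : hd (lam k) = - (al * hd (g (x k))) by rewrite Hl hd_hat_scale.
    have Hpos : 0 < al * hd (g (x k)) by lra.
    have Hak : 0 <= ak k.
      have Hd0' : dot (vscale al (hat (g (x k)))) (jacv dg (x k) (u k)) = 0 by rewrite -Hl.
      have := alg_B Hb Hpos Hd0'; rewrite /ak /dk; lra.
    have Hq0 : 0 < hd (g (x k)).
      have := vnorm_ge0 (tl (g (x k))); rewrite Hb => H; nra.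
    move: HMk; rewrite /Hcurv.
    destruct (excluded_middle_informative _) as [Hyes|HN]; last by exfalso; apply: HN.
    rewrite (quad_curv (fun i => dg (x k) (lift ord0 i)) (dg (x k) ord0)).
    have -> : (vsum (fun i : 'I_m => dot (dg (x k) (lift ord0 i)) (u k) * dot (dg (x k) (lift ord0 i)) (u k))
       - dot (dg (x k) ord0) (u k) * dot (dg (x k) ord0) (u k)) = ak k by [].
    have -> : - hd (lam k) / hd (g (x k)) = al by rewrite Hhd; field; lra.
    move=> HalM; split => //.
    rewrite /K.
    have HM0 := Rmax_l M 0.
    apply: (Rmult_le_reg_l c) => //.
    have -> : c * (Rmax M 0 / c * g (x k) ord0) = Rmax M 0 * hd (g (x k)) by rewrite /hd; field; lra.
    have : c * ak k <= al * hd (g (x k)) * ak k by apply: Rmult_le_compat_r; lra.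
    have : hd (g (x k)) * (al * ak k) <= hd (g (x k)) * Rmax M 0 by apply: Rmult_le_compat_l; lra.
    have E : al * hd (g (x k)) * ak k = hd (g (x k)) * (al * ak k) by ring.
    move=> HB HA; rewrite E in HA; rewrite (Rmult_comm (Rmax M 0)); lra.
set A := dot (tl (jacv dg xb ut)) (tl (jacv dg xb ut)) - hd (jacv dg xb ut) * hd (jacv dg xb ut) in Ha *.
have H1 : 0 <= A.
  apply: (lim_le_ev _ (cv_const 0) Ha).
  exists (N1 + N2 + N3)%N => k Hk; exact: (Claim k Hk).1.
have H2 : A <= K * 0.
  apply: (lim_le_ev _ Ha (CV_mult _ _ _ _ (cv_const K) (Cg0 ord0))).
  exists (N1 + N2 + N3)%N => k Hk; exact: (Claim k Hk).2.
rewrite Rmult_0_r in H2.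
have -> : A = 0 by lra.
ring.
Qed.
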